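(* Let $p$ (true dynamics) and $\hat p$ (learned model) be dynamics kernels, $\pi_D$ and $\pi$ policies, and $k\ge0$ an integer. Suppose $\sup_{s\in\mathcal S} D_{TV}\big(\pi_D(\cdot\mid s),\pi(\cdot\mid s)\big)\le\epsilon_\pi$, and suppose that, for the branched construction with pre-branch pair $(\pi_D,p)$ and post-branch pair $(\pi,p)$ and branch length $k$, for every $t\ge0$ and every $i$ with $m_t\le i<t$, $$\mathbb E_{s\sim \nu_{t,i},\,a\sim\pi(\cdot\mid s)}\Big[D_{TV}\big(p(\cdot\mid s,a),\hat p(\cdot\mid s,a)\big)\Big]\le\epsilon_{m'},$$ where $\nu_{t,i}$ is the law of $s_i$ in that construction. Let $\eta[\pi]=\eta(\pi,p)$ and $\eta^{\mathrm{branch}}[\pi]=\eta_k(\pi_D,p;\pi,\hat p)$. Then $$\eta[\pi]\ \ge\ \eta^{\mathrm{branch}}[\pi]-2r_{\max}\left[\frac{\gamma^{k+1}\epsilon_\pi}{(1-\gamma)^2}+\frac{\gamma^{k}\epsilon_\pi}{1-\gamma}+\frac{k}{1-\gamma}\,\epsilon_{m'}\right].$$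
   Context: Let $\mathcal S$ and $\mathcal A$ be countable (e.g. finite) state and action spaces, $\rho_0$ a probability distribution on $\mathcal S$ (initial state distribution), $\gamma\in(0,1)$ a discount factor, and $r:\mathcal S\times\mathcal A\to\mathbb R$ a reward function with $|r(s,a)|\le r_{\max}$ for all $(s,a)$. A policy is a Markov kernel $\pi(a\mid s)$ from $\mathcal S$ to $\mathcal A$; a dynamics kernel is a Markov kernel $q(s'\mid s,a)$ from $\mathcal S\times\mathcal A$ to $\mathcal S$. For a policy $\pi$ and dynamics $q$, the return is $\eta(\pi,q)=\sum_{t\ge0}\gamma^t\,\mathbb E[r(s_t,a_t)]$, where $s_0\sim\rho_0$, $a_t\sim\pi(\cdot\mid s_t)$, $s_{t+1}\sim q(\cdot\mid s_t,a_t)$. For probability distributions $\mu,\nu$ on a countable set, $D_{TV}(\mu,\nu)=\frac12\sum_x|\mu(x)-\nu(x)|$. Branched return: given a ''pre-branch'' pair (policy $\pi^{\mathrm{pre}}$, dynamics $q^{\mathrm{pre}}$), a ''post-branch'' pair (policy $\pi^{\mathrm{post}}$, dynamics $q^{\mathrm{post}}$) and an integer $k\ge0$, for each $t\ge0$ let $m_t=\max(t-k,0)$ and generate $s_0\sim\rho_0$; for $0\le i<m_t$: $a_i\sim\pi^{\mathrm{pre}}(\cdot\mid s_i)$, $s_{i+1}\sim q^{\mathrm{pre}}(\cdot\mid s_i,a_i)$; for $m_t\le i<t$: $a_i\sim\pi^{\mathrm{post}}(\cdot\mid s_i)$, $s_{i+1}\sim q^{\mathrm{post}}(\cdot\mid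 s_i,a_i)$; finally $a_t\sim\pi^{\mathrm{post}}(\cdot\mid s_t)$. Let $d_t$ be the law of $(s_t,a_t)$ so produced. The $k$-branched return is $\eta_k(\pi^{\mathrm{pre}},q^{\mathrm{pre}};\pi^{\mathrm{post}},q^{\mathrm{post}})=\sum_{t\ge0}\gamma^t\,\mathbb E_{(s,a)\sim d_t}[r(s,a)]$. (Thus the state at time $t$ is obtained by following the pre-branch pair up to time $t-k$ and then the post-branch pair for the remaining at most $k$ steps; note $\eta_k(\pi,q;\pi,q)=\eta(\pi,q)$.) *)

(* Defs.v *)
From Stdlib Require Import Reals List ClassicalEpsilon.
Open Scope R_scope.

Definition fsum {T : Type} (f : T -> R) (l : list T) : R :=
  fold_right (fun x acc => f x + acc) 0 l.

Definition psums {T : Type} (f : T -> R) : R -> Prop :=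
  fun s => exists l : list T, NoDup l /\ s = fsum f l.

Lemma psums_0 {T : Type} (f : T -> R) : exists x, psums f x.
Proof. exists 0. exists nil. split; [constructor | reflexivity]. Qed.

(** Sum of a nonnegative function: supremum of its finite partial sums
    (convention: 0 if the partial sums are unbounded). *)
Definition psum {T : Type} (f : T -> R) : R :=
  match excluded_middle_informative (bound (psums f)) with
  | left hb => proj1_sig (completeness (psums f) hb (psums_0 f))
  | right _ => 0
  end.

Definition tsum {T : Type} (f : T -> R) : R :=
  psum (fun x => Rmax (f x) 0) - psum (fun x => Rmax (- f x) 0).

Definition countable (T : Type) : Prop :=
  exists enc : T -> nat, forall x y, enc x = enc y -> x = y.

Definition is_distr {T : Type} (mu : T -> R) : Prop :=
  (forall x, 0 <= mu x) /\ tsum mu = 1.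

(** policy pi(a|s) = pi s a *)
Definition is_policy {St Ac : Type} (pi : St -> Ac -> R) : Prop :=
  forall s, is_distr (pi s).

(** dynamics q(s'|s,a) = q s a s' *)
Definition is_dynamics {St Ac : Type} (q : St -> Ac -> St -> R) : Prop :=
  forall s a, is_distr (q s a).

Definition TV {T : Type} (mu nu : T -> R) : R :=
  / 2 * tsum (fun x => Rabs (mu x - nu x)).

Definition step {St Ac : Type} (pi : St -> Ac -> R) (q : St -> Ac -> St -> R)
  (nu : St -> R) : St -> R :=
  fun s' => tsum (fun sa : St * Ac =>
                    nu (fst sa) * pi (fst sa) (snd sa) * q (fst sa) (snd sa) s').

Fixpoint state_law {St Ac : Type} (rho0 : St -> R)
  (pi : St -> Ac -> R) (q : St -> Ac -> St -> R) (t : nat) : St -> R :=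
  match t with
  | O => rho0
  | Datatypes.S t' => step pi q (state_law rho0 pi q t')
  end.

Definition eta {St Ac : Type} (rho0 : St -> R) (gamma : R) (r : St -> Ac -> R)
  (pi : St -> Ac -> R) (q : St -> Ac -> St -> R) : R :=
  tsum (fun t : nat =>
    gamma ^ t * tsum (fun sa : St * Ac =>
      state_law rho0 pi q t (fst sa) * pi (fst sa) (snd sa) * r (fst sa) (snd sa))).

Fixpoint branch_law_aux {St Ac : Type} (rho0 : St -> R)
  (pipre : St -> Ac -> R) (qpre : St -> Ac -> St -> R)
  (pipost : St -> Ac -> R) (qpost : St -> Ac -> St -> R)
  (m i : nat) : St -> R :=
  match i with
  | O => rho0
  | Datatypes.S i' =>
      if Nat.ltb i' m
      then step pipre qpre (branch_law_aux rho0 pipre qpre pipost qpost m i')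
      else step pipost qpost (branch_law_aux rho0 pipre qpre pipost qpost m i')
  end.

(** nu_{t,i}: law of s_i in the branched construction for time t,
    with m_t = max(t-k,0) = (t - k)%nat (truncated subtraction). *)
Definition branch_law {St Ac : Type} (rho0 : St -> R)
  (pipre : St -> Ac -> R) (qpre : St -> Ac -> St -> R)
  (pipost : St -> Ac -> R) (qpost : St -> Ac -> St -> R)
  (k t i : nat) : St -> R :=
  branch_law_aux rho0 pipre qpre pipost qpost (t - k)%nat i.

Definition branch_d {St Ac : Type} (rho0 : St -> R)
  (pipre : St -> Ac -> R) (qpre : St -> Ac -> St -> R)
  (pipost : St -> Ac -> R) (qpost : St -> Ac -> St -> R)
  (k t : nat) : St * Ac -> R :=
  fun sa => branch_law rho0 pipre qpre pipost qpost k t t (fst sa)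
            * pipost (fst sa) (snd sa).

Definition eta_k {St Ac : Type} (rho0 : St -> R) (gamma : R) (r : St -> Ac -> R)
  (pipre : St -> Ac -> R) (qpre : St -> Ac -> St -> R)
  (pipost : St -> Ac -> R) (qpost : St -> Ac -> St -> R) (k : nat) : R :=
  tsum (fun t : nat =>
    gamma ^ t * tsum (fun sa : St * Ac =>
      branch_d rho0 pipre qpre pipost qpost k t sa * r (fst sa) (snd sa))).

(* Main.v *)
Require Import Defs.
From Stdlib Require Import Reals.
From Stdlib Require Import List Lra Lia Classical ClassicalEpsilon FunctionalExtensionality.
Open Scope R_scope.


Definition sm {T : Type} (f : T -> R) := bound (psums f).
Definition eqdec {T : Type} : forall x y : T, {x = y} + {x <> y} :=
  fun x y => excluded_middle_informative (x = y).

Lemma psum_lub {T} (f : T -> R) : sm f -> is_lub (psums f) (psum f).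
Proof.
  intro H. unfold psum. destruct (excluded_middle_informative (bound (psums f))) as [hb|hn].
  - exact (proj2_sig (completeness _ hb (psums_0 f))).
  - contradiction.
Qed.

Lemma psum_ub {T} (f : T -> R) l : sm f -> NoDup l -> fsum f l <= psum f.
Proof. intros H Hl. apply (proj1 (psum_lub f H)). exists l; auto. Qed.

Lemma psum_le {T} (f : T -> R) C : (forall l, NoDup l -> fsum f l <= C) -> sm f /\ psum f <= C.
Proof.
  intro H. assert (Hs : sm f).
  { exists C. intros x [l [Hl E]]. rewrite E. auto. }
  split; auto. apply (proj2 (psum_lub f Hs)). intros x [l [Hl E]]. rewrite E. auto.
Qed.

Lemma psum_ge0 {T} (f : T -> R) : 0 <= psum f.
Proof.
  unfold psum. destruct (excluded_middle_informative (bound (psums f))) as [hb|hn]; [|lra].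
  destruct (proj2_sig (completeness _ hb (psums_0 f))) as [Hm _]. apply Hm.
  exists nil. split; [constructor|reflexivity].
Qed.

Lemma psum_ext {T} (f g : T -> R) : (forall x, f x = g x) -> psum f = psum g.
Proof. intro H. replace g with f; auto. apply functional_extensionality; auto. Qed.

Lemma sm_ext {T} (f g : T -> R) : (forall x, f x = g x) -> sm f -> sm g.
Proof. intros H. replace g with f; auto. apply functional_extensionality; auto. Qed.

Lemma fsum_app {T} (f : T -> R) l1 l2 : fsum f (l1 ++ l2) = fsum f l1 + fsum f l2.
Proof. induction l1; simpl; [lra|]. rewrite IHl1; lra. Qed.

Lemma fsum_map {T U} (f : U -> R) (g : T -> U) l : fsum f (map g l) = fsum (fun x => f (g x)) l.
Proof. induction l; simpl; auto. rewrite IHl; auto. Qed.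

Lemma fsum_le {T} (f g : T -> R) l : (forall x, In x l -> f x <= g x) -> fsum f l <= fsum g l.
Proof.
  induction l; simpl; intros H; [lra|].
  assert (f a <= g a) by auto. assert (fsum f l <= fsum g l) by auto. lra.
Qed.

Lemma fsum_ext {T} (f g : T -> R) l : (forall x, f x = g x) -> fsum f l = fsum g l.
Proof. intro H; induction l; simpl; auto. rewrite IHl, H; auto. Qed.

Lemma fsum_ge0 {T} (f : T -> R) l : (forall x, 0 <= f x) -> 0 <= fsum f l.
Proof. intro H; induction l; simpl; [lra|]. specialize (H a); lra. Qed.

Lemma fsum_plus {T} (f g : T -> R) l : fsum (fun x => f x + g x) l = fsum f l + fsum g l.
Proof. induction l; simpl; [lra|]. rewrite IHl; lra. Qed.

Lemma fsum_scal {T} (f : T -> R) c l : fsum (fun x => c * f x) l = c * fsum f l.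
Proof. induction l; simpl; [lra|]. rewrite IHl; lra. Qed.

Lemma fsum_zero {T} l : fsum (fun _ : T => 0) l = 0.
Proof. induction l; simpl; [lra|]. rewrite IHl; lra. Qed.

Lemma fsum_incl {T} (f : T -> R) l1 l2 : (forall x, 0 <= f x) -> NoDup l1 -> NoDup l2 ->
  incl l1 l2 -> fsum f l1 <= fsum f l2.
Proof.
  intros Hf H1. revert l2. induction l1 as [|x l1 IH]; intros l2 H2 Hi; simpl.
  - apply fsum_ge0; auto.
  - assert (Hx : In x l2) by (apply Hi; left; auto).
    destruct (in_split _ _ Hx) as [a [b ->]].
    rewrite fsum_app. simpl.
    inversion H1; subst.
    assert (fsum f l1 <= fsum f (a ++ b)).
    { apply IH; auto. eapply NoDup_remove_1; eauto.
      intros y Hy. assert (In y (a ++ x :: b)) by (apply Hi; right; auto).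
      apply in_app_or in H. apply in_or_app. destruct H as [H|[H|H]]; auto.
      subst; contradiction. }
    rewrite fsum_app in H. lra.
Qed.

Lemma NoDup_prod {X Y} (xs : list X) (ys : list Y) : NoDup xs -> NoDup ys -> NoDup (list_prod xs ys).
Proof.
  intros Hx Hy. induction Hx as [|x xs Hn Hx IH]; simpl; [constructor|].
  apply NoDup_app; auto.
  - apply NoDup_map_NoDup_ForallPairs; auto. intros a b _ _ E. congruence.
  - intros [a b] Ha Hb. apply in_map_iff in Ha. destruct Ha as [y [E _]]. inversion E; subst.
    apply in_prod_iff in Hb. tauto.
Qed.

Lemma fsum_prod {X Y} (f : X * Y -> R) xs ys :
  fsum f (list_prod xs ys) = fsum (fun x => fsum (fun y => f (x, y)) ys) xs.
Proof. induction xs; simpl; auto. rewrite fsum_app, fsum_map, IHxs. auto. Qed.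

Lemma fsum_swap {X Y} (f : X -> Y -> R) xs ys :
  fsum (fun y => fsum (fun x => f x y) xs) ys = fsum (fun x => fsum (fun y => f x y) ys) xs.
Proof.
  induction xs; simpl.
  - apply fsum_zero.
  - rewrite fsum_plus, IHxs. auto.
Qed.

Lemma psum_mono {T} (f g : T -> R) : (forall x, f x <= g x) -> sm g -> sm f /\ psum f <= psum g.
Proof.
  intros H Hg. apply psum_le. intros l Hl. eapply Rle_trans; [apply fsum_le; intros; apply H|].
  apply psum_ub; auto.
Qed.

Lemma psum_zero {T} : psum (fun _ : T => 0) = 0.
Proof.
  assert (psum (fun _ : T => 0) <= 0).
  { apply psum_le. intros; rewrite fsum_zero; lra. }
  pose proof (psum_ge0 (fun _ : T => 0)). lra.
Qed.

Lemma sm_zero {T} : sm (fun _ : T => 0).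
Proof. apply (psum_le _ 0). intros; rewrite fsum_zero; lra. Qed.

Lemma psum_add {T} (f g : T -> R) : (forall x, 0 <= f x) -> (forall x, 0 <= g x) ->
  sm f -> sm g -> sm (fun x => f x + g x) /\ psum (fun x => f x + g x) = psum f + psum g.
Proof.
  intros Hf Hg Sf Sg.
  destruct (psum_le (fun x => f x + g x) (psum f + psum g)) as [S H1].
  { intros l Hl. rewrite fsum_plus. pose proof (psum_ub f l Sf Hl). pose proof (psum_ub g l Sg Hl). lra. }
  split; auto.
  assert (psum f <= psum (fun x => f x + g x) - psum g); [|lra].
  apply psum_le. intros l1 Hl1.
  assert (psum g <= psum (fun x => f x + g x) - fsum f l1); [|lra].
  apply psum_le. intros l2 Hl2.
  set (l := nodup eqdec (l1 ++ l2)).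
  assert (Hl : NoDup l) by apply NoDup_nodup.
  assert (fsum f l1 <= fsum f l).
  { apply fsum_incl; auto. intros y Hy. apply nodup_In. apply in_or_app; auto. }
  assert (fsum g l2 <= fsum g l).
  { apply fsum_incl; auto. intros y Hy. apply nodup_In. apply in_or_app; auto. }
  pose proof (psum_ub _ l S Hl). rewrite fsum_plus in H2. lra.
Qed.

Lemma psum_scal {T} (f : T -> R) c : 0 <= c -> sm f -> sm (fun x => c * f x) /\ psum (fun x => c * f x) = c * psum f.
Proof.
  intros Hc Sf.
  destruct (psum_le (fun x => c * f x) (c * psum f)) as [S H1].
  { intros l Hl. rewrite fsum_scal. apply Rmult_le_compat_l; auto. apply psum_ub; auto. }
  split; auto.
  destruct (Req_dec c 0) as [E|E].
  - subst. rewrite Rmult_0_l. pose proof (psum_ge0 (fun x => 0 * f x)). lra.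
  - assert (psum f <= psum (fun x => c * f x) / c).
    { apply psum_le. intros l Hl. pose proof (psum_ub _ l S Hl). rewrite fsum_scal in H.
      apply (Rmult_le_reg_l c); [lra|]. field_simplify; lra. }
    apply (Rmult_le_compat_l c) in H; [|lra]. field_simplify in H; lra.
Qed.

Lemma psum_fin {X Y} (f : X -> Y -> R) xs : (forall x y, 0 <= f x y) -> (forall x, sm (f x)) ->
  sm (fun y => fsum (fun x => f x y) xs) /\
  psum (fun y => fsum (fun x => f x y) xs) = fsum (fun x => psum (f x)) xs.
Proof.
  intros Hf Sf. induction xs as [|x xs [S IH]]; simpl.
  - split; [apply sm_zero|apply psum_zero].
  - destruct (psum_add (f x) (fun y => fsum (fun x => f x y) xs)) as [S' E]; auto.
    { intro; apply fsum_ge0; auto. }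
    split; auto. rewrite E, IH. auto.
Qed.

Lemma psum_nonneg_le_diff {T} (f g : T -> R) : (forall x, 0 <= f x) -> (forall x, 0 <= g x) ->
  sm f -> sm g -> sm (fun x => Rabs (f x - g x)) /\ Rabs (psum f - psum g) <= psum (fun x => Rabs (f x - g x)).
Proof.
  intros Hf Hg Sf Sg.
  destruct (psum_add f g) as [Sfg _]; auto.
  destruct (psum_mono (fun x => Rabs (f x - g x)) (fun x => f x + g x)) as [Sd _]; auto.
  { intro x. specialize (Hf x); specialize (Hg x). unfold Rabs; destruct Rcase_abs; lra. }
  split; auto.
  assert (Hd : forall x, 0 <= Rabs (f x - g x)) by (intros; apply Rabs_pos).
  destruct (psum_add g (fun x => Rabs (f x - g x))) as [S1 E1]; auto.
  destruct (psum_add f (fun x => Rabs (f x - g x))) as [S2 E2]; auto.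
  destruct (psum_mono f (fun x => g x + Rabs (f x - g x))) as [_ L1]; auto.
  { intro x. unfold Rabs; destruct Rcase_abs; lra. }
  destruct (psum_mono g (fun x => f x + Rabs (f x - g x))) as [_ L2]; auto.
  { intro x. unfold Rabs; destruct Rcase_abs; lra. }
  apply Rabs_le. lra.
Qed.

Section Fub.
Context {X Y : Type}.

Lemma fubA (f : X * Y -> R) : (forall z, 0 <= f z) -> (forall x, sm (fun y => f (x, y))) ->
  sm (fun x => psum (fun y => f (x, y))) ->
  sm f /\ psum f <= psum (fun x => psum (fun y => f (x, y))).
Proof.
  intros Hf Sx SS. apply psum_le. intros L HL.
  set (xs := nodup eqdec (map fst L)). set (ys := nodup eqdec (map snd L)).
  assert (fsum f L <= fsum f (list_prod xs ys)).
  { apply fsum_incl; auto. apply NoDup_prod; apply NoDup_nodup.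
    intros [x y] H. apply in_prod_iff. split; apply nodup_In.
    - change x with (fst (x, y)); apply in_map; auto.
    - change y with (snd (x, y)); apply in_map; auto. }
  rewrite fsum_prod in H.
  eapply Rle_trans; [apply H|]. eapply Rle_trans; [|apply (psum_ub _ xs SS (NoDup_nodup _ _))].
  apply fsum_le. intros x _. apply psum_ub; auto. apply NoDup_nodup.
Qed.

Lemma fubB (f : X * Y -> R) : (forall z, 0 <= f z) -> sm f ->
  (forall x, sm (fun y => f (x, y))) /\ sm (fun x => psum (fun y => f (x, y))) /\
  psum (fun x => psum (fun y => f (x, y))) <= psum f.
Proof.
  intros Hf Sf.
  assert (Sx : forall x, sm (fun y => f (x, y))).
  { intro x. apply (psum_le _ (psum f)). intros ys Hys.
    rewrite <- (fsum_map f (pair x)). apply psum_ub; auto.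
    apply NoDup_map_NoDup_ForallPairs; auto. intros a b _ _ E; congruence. }
  split; auto.
  apply psum_le. intros xs Hxs.
  destruct (psum_fin (fun x y => f (x, y)) xs) as [S E]; auto.
  rewrite <- E. apply psum_le. intros ys Hys.
  rewrite (fsum_swap (fun x y => f (x, y))), <- fsum_prod. apply psum_ub; auto.
  apply NoDup_prod; auto.
Qed.

Lemma fub (f : X * Y -> R) : (forall z, 0 <= f z) -> (forall x, sm (fun y => f (x, y))) ->
  sm (fun x => psum (fun y => f (x, y))) ->
  sm f /\ psum f = psum (fun x => psum (fun y => f (x, y))).
Proof.
  intros. destruct (fubA f) as [S L]; auto. destruct (fubB f) as [_ [_ L2]]; auto.
  split; auto; lra.
Qed.

Lemma psum_swap (f : X * Y -> R) : sm f ->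
  sm (fun z : Y * X => f (snd z, fst z)) /\ psum (fun z : Y * X => f (snd z, fst z)) = psum f.
Proof.
  intro Sf.
  destruct (psum_le (fun z : Y * X => f (snd z, fst z)) (psum f)) as [S L].
  { intros l Hl. rewrite <- (fsum_map f (fun z : Y * X => (snd z, fst z))). apply psum_ub; auto.
    apply NoDup_map_NoDup_ForallPairs; auto. intros [a b] [c d] _ _ E; simpl in E; congruence. }
  split; auto.
  assert (psum f <= psum (fun z : Y * X => f (snd z, fst z))); [|lra].
  apply psum_le. intros l Hl.
  replace (fsum f l) with (fsum (fun z : Y*X => f (snd z, fst z)) (map (fun z : X*Y => (snd z, fst z)) l)).
  - apply psum_ub; auto. apply NoDup_map_NoDup_ForallPairs; auto.
    intros [a b] [c d] _ _ E; simpl in E; congruence.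
  - rewrite fsum_map. apply fsum_ext. intros [a b]; auto.
Qed.
End Fub.

Lemma tsum_nn {T} (f : T -> R) : (forall x, 0 <= f x) -> tsum f = psum f.
Proof.
  intro H. unfold tsum.
  rewrite (psum_ext (fun x => Rmax (f x) 0) f), (psum_ext (fun x => Rmax (- f x) 0) (fun _ => 0)).
  - rewrite psum_zero; lra.
  - intro x; specialize (H x); unfold Rmax; destruct Rle_dec; lra.
  - intro x; specialize (H x); unfold Rmax; destruct Rle_dec; lra.
Qed.

Definition D1 {T} (mu : T -> R) := (forall x, 0 <= mu x) /\ sm mu /\ psum mu = 1.

Lemma distr_D1 {T} (mu : T -> R) : is_distr mu -> D1 mu.
Proof.
  intros [H1 H2]. rewrite tsum_nn in H2; auto. split; auto. split; auto.
  unfold psum in H2. destruct (excluded_middle_informative (bound (psums mu))); auto. lra.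
Qed.

Lemma D1_le1 {T} (mu : T -> R) x : D1 mu -> mu x <= 1.
Proof.
  intros [H1 [H2 H3]]. rewrite <- H3.
  replace (mu x) with (fsum mu (x :: nil)) by (simpl; lra).
  apply psum_ub; auto. constructor; [intros []|constructor].
Qed.

Lemma D1_inhabited {T} (mu : T -> R) : D1 mu -> exists x : T, True.
Proof.
  intros [H1 [H2 H3]]. apply NNPP. intro N.
  assert (psum mu <= 0); [|lra].
  apply psum_le. intros [|x l] _; simpl; [lra|]. exfalso; apply N; exists x; auto.
Qed.

Lemma sm_abs_le {T} (f g : T -> R) : (forall x, Rabs (f x) <= g x) -> sm g -> sm (fun x => Rabs (f x)).
Proof. intros. apply (psum_mono _ g); auto. Qed.

Lemma tsum_diff {T} (h h' : T -> R) : sm (fun x => Rabs (h x)) -> sm (fun x => Rabs (h' x)) ->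
  tsum h - tsum h' <= psum (fun x => Rabs (h x - h' x)).
Proof.
  intros S S'. unfold tsum.
  assert (Hp : forall y, 0 <= Rmax y 0) by (intro; apply Rmax_r).
  assert (Hm : forall y, Rmax y 0 <= Rabs y) by (intro y; unfold Rmax, Rabs; destruct Rle_dec, Rcase_abs; lra).
  assert (Hn : forall y, Rmax (- y) 0 <= Rabs y) by (intro y; unfold Rmax, Rabs; destruct Rle_dec, Rcase_abs; lra).
  destruct (psum_mono (fun x => Rmax (h x) 0) _ (fun x => Hm (h x)) S) as [S1 _].
  destruct (psum_mono (fun x => Rmax (- h x) 0) _ (fun x => Hn (h x)) S) as [S2 _].
  destruct (psum_mono (fun x => Rmax (h' x) 0) _ (fun x => Hm (h' x)) S') as [S3 _].
  destruct (psum_mono (fun x => Rmax (- h' x) 0) _ (fun x => Hn (h' x)) S') as [S4 _].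
  destruct (psum_add _ _ (fun x => Rabs_pos (h x)) (fun x => Rabs_pos (h' x)) S S') as [S5 _].
  destruct (psum_mono (fun x => Rabs (h x - h' x)) (fun x => Rabs (h x) + Rabs (h' x))) as [S6 _]; auto.
  { intro x. unfold Rabs; repeat destruct Rcase_abs; lra. }
  destruct (psum_add _ _ (fun x => Hp (h x)) (fun x => Hp (- h' x)) S1 S4) as [_ E1].
  destruct (psum_add _ _ (fun x => Hp (- h x)) (fun x => Hp (h' x)) S2 S3) as [S7 E2].
  destruct (psum_add _ _ (fun x => Rplus_le_le_0_compat _ _ (Hp (- h x)) (Hp (h' x))) (fun x => Rabs_pos (h x - h' x)) S7 S6) as [S8 E3].
  destruct (psum_mono (fun x => Rmax (h x) 0 + Rmax (- h' x) 0) (fun x => Rmax (- h x) 0 + Rmax (h' x) 0 + Rabs (h x - h' x)) ltac:(intro x; cbv beta; unfold Rmax, Rabs; repeat destruct Rle_dec; repeat destruct Rcase_abs; lra) S8) as [_ L].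
  rewrite E1, E3, E2 in L. lra.
Qed.

Lemma tsum_abs_le {T} (h : T -> R) : sm (fun x => Rabs (h x)) -> tsum h <= psum (fun x => Rabs (h x)).
Proof.
  intro S. pose proof (tsum_diff h (fun _ => 0) S) as H. cbv beta in H.
  assert (tsum (fun _ : T => 0) = 0).
  { rewrite tsum_nn; [apply psum_zero|intros; lra]. }
  rewrite (psum_ext (fun x => Rabs (h x - 0)) (fun x => Rabs (h x))) in H.
  - rewrite H0 in H. rewrite <- (Rminus_0_r (tsum h)). apply H. apply (sm_ext (fun _ => 0)); [intros; rewrite Rabs_R0; auto|apply sm_zero].
  - intros; rewrite Rminus_0_r; auto.
Qed.

Lemma sm_add {T} (f g : T -> R) : (forall x, 0 <= f x) -> (forall x, 0 <= g x) -> sm f -> sm g -> sm (fun x => f x + g x).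
Proof. intros; apply psum_add; auto. Qed.
Lemma sm_scal {T} (f : T -> R) c : 0 <= c -> sm f -> sm (fun x => c * f x).
Proof. intros; apply psum_scal; auto. Qed.

Section MDP.
Context {St Ac : Type}.

Definition joint (w : St -> R) (pi : St -> Ac -> R) : St * Ac -> R :=
  fun sa => w (fst sa) * pi (fst sa) (snd sa).

Lemma pol_D1 (pi : St -> Ac -> R) s : is_policy pi -> D1 (pi s).
Proof. intro H; apply distr_D1; auto. Qed.
Lemma dyn_D1 (q : St -> Ac -> St -> R) s a : is_dynamics q -> D1 (q s a).
Proof. intro H; apply distr_D1; auto. Qed.

Lemma joint_lem w pi : (forall s, 0 <= w s) -> sm w -> is_policy pi ->
  sm (joint w pi) /\ psum (joint w pi) = psum w.
Proof.
  intros Hw Sw Hp.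
  assert (Hsec : forall s, sm (fun a => joint w pi (s, a)) /\ psum (fun a => joint w pi (s, a)) = w s).
  { intro s. destruct (pol_D1 pi s Hp) as [_ [S E]].
    destruct (psum_scal (pi s) (w s) (Hw s) S) as [S' E'].
    unfold joint; simpl. split; auto. rewrite E', E; ring. }
  destruct (fub (joint w pi)) as [S E].
  - intros [s a]; unfold joint; simpl. destruct (pol_D1 pi s Hp) as [H _]. apply Rmult_le_pos; auto.
  - intro s; apply Hsec.
  - apply (sm_ext w); auto. intro s; symmetry; apply Hsec.
  - split; auto. rewrite E. apply psum_ext. intro; apply Hsec.
Qed.

Lemma joint_nn w pi : (forall s, 0 <= w s) -> is_policy pi -> forall z, 0 <= joint w pi z.
Proof. intros Hw Hp [s a]. unfold joint; simpl. destruct (pol_D1 pi s Hp) as [H _]. apply Rmult_le_pos; auto. Qed.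

Definition stepF (nu : St -> R) pi (q : St -> Ac -> St -> R) (s' : St) : St * Ac -> R :=
  fun sa => nu (fst sa) * pi (fst sa) (snd sa) * q (fst sa) (snd sa) s'.

Lemma step_lem nu pi q : D1 nu -> is_policy pi -> is_dynamics q ->
  (forall s', sm (stepF nu pi q s')) /\ (forall s', step pi q nu s' = psum (stepF nu pi q s')) /\
  D1 (step pi q nu).
Proof.
  intros [Hn [Sn En]] Hp Hq.
  destruct (joint_lem nu pi Hn Sn Hp) as [Sj Ej].
  assert (Hj := joint_nn nu pi Hn Hp).
  set (F := fun z : (St * Ac) * St => joint nu pi (fst z) * q (fst (fst z)) (snd (fst z)) (snd z)).
  assert (HF : forall z, 0 <= F z).
  { intros [[s a] s']. unfold F; simpl. destruct (dyn_D1 q s a Hq) as [H _]. apply Rmult_le_pos; auto. }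
  assert (Hsec : forall sa, sm (fun s' => F (sa, s')) /\ psum (fun s' => F (sa, s')) = joint nu pi sa).
  { intros [s a]. destruct (dyn_D1 q s a Hq) as [_ [S E]].
    destruct (psum_scal (q s a) (joint nu pi (s, a)) (Hj _) S) as [S' E'].
    unfold F; simpl. split; auto. rewrite E', E; ring. }
  destruct (fub F HF) as [SF EF].
  { intro; apply Hsec. }
  { apply (sm_ext (joint nu pi)); auto. intro; symmetry; apply Hsec. }
  rewrite (psum_ext _ (joint nu pi)), Ej, En in EF by (intro; apply Hsec).
  destruct (psum_swap F SF) as [SG EG].
  set (G := fun z : St * (St * Ac) => F (snd z, fst z)) in *.
  assert (HG : forall z, 0 <= G z) by (intro; apply HF).
  destruct (fubB G HG SG) as [Sec [SS _]].
  destruct (fub G HG Sec SS) as [_ EG2].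
  assert (Hst : forall s' sa, G (s', sa) = stepF nu pi q s' sa).
  { intros s' [s a]. unfold G, F, stepF, joint; simpl. reflexivity. }
  assert (Hst2 : forall s', step pi q nu s' = psum (stepF nu pi q s')).
  { intro s'. unfold step. rewrite tsum_nn; [reflexivity|]. intros [s a]. apply (HF ((s,a),s')). }
  split; [|split; auto].
  - intro s'. apply (sm_ext (fun y => G (s', y))); auto.
  - split; [|split].
    + intro s'. rewrite Hst2. apply psum_ge0.
    + apply (sm_ext (fun x => psum (fun y => G (x, y)))); [|auto].
      intro s'. rewrite Hst2. apply psum_ext. intro; apply Hst.
    + rewrite (psum_ext _ (fun x => psum (fun y => G (x, y)))).
      * rewrite <- EG2, EG, EF. auto.
      * intro s'. rewrite Hst2. apply psum_ext. intro; symmetry; apply Hst.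
Qed.
End MDP.

Lemma abs3 a b c a' b' c' : 0 <= a -> 0 <= b -> 0 <= b' -> 0 <= c' ->
  Rabs (a * b * c - a' * b' * c') <= Rabs (a - a') * b' * c' + a * Rabs (b - b') * c' + a * b * Rabs (c - c').
Proof.
  intros. replace (a * b * c - a' * b' * c') with ((a - a') * b' * c' + a * (b - b') * c' + a * b * (c - c')) by ring.
  eapply Rle_trans; [apply Rabs_triang|]. apply Rplus_le_compat.
  - eapply Rle_trans; [apply Rabs_triang|]. rewrite !Rabs_mult, (Rabs_right b'), (Rabs_right c'), (Rabs_right a) by lra. lra.
  - rewrite !Rabs_mult, (Rabs_right a), (Rabs_right b) by lra. lra.
Qed.

Definition DL {T} (mu nu : T -> R) := psum (fun s => Rabs (mu s - nu s)).

Lemma DL_lem {T} (mu nu : T -> R) : D1 mu -> D1 nu -> sm (fun s => Rabs (mu s - nu s)) /\ DL mu nu <= 2.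
Proof.
  intros [H1 [S1 E1]] [H2 [S2 E2]].
  destruct (psum_add mu nu H1 H2 S1 S2) as [S E].
  destruct (psum_mono (fun s => Rabs (mu s - nu s)) (fun x => mu x + nu x)) as [S' L]; auto.
  { intro x; specialize (H1 x); specialize (H2 x); unfold Rabs; destruct Rcase_abs; lra. }
  split; auto. unfold DL. lra.
Qed.

Section MDP2.
Context {St Ac : Type}.

Lemma stepF_nn (nu : St -> R) (pi : St -> Ac -> R) q s' : (forall s, 0 <= nu s) -> is_policy pi -> is_dynamics q ->
  forall z, 0 <= stepF nu pi q s' z.
Proof.
  intros Hn Hp Hq [s a]. unfold stepF; simpl.
  destruct (pol_D1 pi s Hp) as [H1 _]. destruct (dyn_D1 q s a Hq) as [H2 _].
  apply Rmult_le_pos; [apply Rmult_le_pos|]; auto.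
Qed.

Lemma step_diff (nu nu' : St -> R) (pi1 pi2 : St -> Ac -> R) (q1 q2 : St -> Ac -> St -> R) :
  D1 nu -> D1 nu' -> is_policy pi1 -> is_policy pi2 -> is_dynamics q1 -> is_dynamics q2 ->
  DL (step pi1 q1 nu) (step pi2 q2 nu') <=
  DL nu nu' + psum (fun sa => nu (fst sa) * Rabs (pi1 (fst sa) (snd sa) - pi2 (fst sa) (snd sa)))
  + psum (fun sa => joint nu pi1 sa * DL (q1 (fst sa) (snd sa)) (q2 (fst sa) (snd sa))).
Proof.
  intros Dn Dn' Hp1 Hp2 Hq1 Hq2.
  pose proof Dn as [Hn [Sn En]]. pose proof Dn' as [Hn' [Sn' En']].
  destruct (DL_lem nu nu' Dn Dn') as [Sd _].
  set (w := fun s => Rabs (nu s - nu' s)).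
  assert (Hw : forall s, 0 <= w s) by (intro; apply Rabs_pos).
  set (c1 := joint w pi2).
  set (c2 := fun sa : St * Ac => nu (fst sa) * Rabs (pi1 (fst sa) (snd sa) - pi2 (fst sa) (snd sa))).
  set (c3 := joint nu pi1).
  set (dq := fun sa : St * Ac => DL (q1 (fst sa) (snd sa)) (q2 (fst sa) (snd sa))).
  assert (Hc1 : forall z, 0 <= c1 z) by (apply joint_nn; auto).
  assert (Hc2 : forall z, 0 <= c2 z) by (intro; apply Rmult_le_pos; [apply Hn|apply Rabs_pos]).
  assert (Hc3 : forall z, 0 <= c3 z) by (apply joint_nn; auto).
  assert (Hdq : forall z, 0 <= dq z /\ dq z <= 2 /\
     sm (fun s' => Rabs (q1 (fst z) (snd z) s' - q2 (fst z) (snd z) s'))).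
  { intros [s a]. destruct (DL_lem _ _ (dyn_D1 q1 s a Hq1) (dyn_D1 q2 s a Hq2)) as [S L].
    unfold dq; simpl. split; [apply psum_ge0|]. auto. }
  set (G := fun z : (St * Ac) * St =>
     c1 (fst z) * q2 (fst (fst z)) (snd (fst z)) (snd z)
     + c2 (fst z) * q2 (fst (fst z)) (snd (fst z)) (snd z)
     + c3 (fst z) * Rabs (q1 (fst (fst z)) (snd (fst z)) (snd z) - q2 (fst (fst z)) (snd (fst z)) (snd z))).
  set (T := fun sa => c1 sa + c2 sa + c3 sa * dq sa).
  assert (HG : forall z, 0 <= G z).
  { intros [[s a] s']. unfold G; simpl. destruct (dyn_D1 q2 s a Hq2) as [H _].
    pose proof (Hc1 (s,a)); pose proof (Hc2 (s,a)); pose proof (Hc3 (s,a)); pose proof (H s').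
    pose proof (Rabs_pos (q1 s a s' - q2 s a s')).
    repeat apply Rplus_le_le_0_compat; apply Rmult_le_pos; auto. }
  assert (Hsec : forall sa, sm (fun s' => G (sa, s')) /\ psum (fun s' => G (sa, s')) = T sa).
  { intros [s a]. destruct (dyn_D1 q2 s a Hq2) as [Hq [Sq Eq]].
    destruct (Hdq (s, a)) as [_ [_ Sa]]. simpl in Sa.
    destruct (psum_scal _ (c1 (s,a)) (Hc1 _) Sq) as [S1 E1].
    destruct (psum_scal _ (c2 (s,a)) (Hc2 _) Sq) as [S2 E2].
    destruct (psum_scal _ (c3 (s,a)) (Hc3 _) Sa) as [S3 E3].
    destruct (psum_add _ _ (fun x => Rmult_le_pos _ _ (Hc1 (s,a)) (Hq x)) (fun x => Rmult_le_pos _ _ (Hc2 (s,a)) (Hq x)) S1 S2) as [S4 E4].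
    destruct (psum_add _ _ (fun x => Rplus_le_le_0_compat _ _ (Rmult_le_pos _ _ (Hc1 (s,a)) (Hq x)) (Rmult_le_pos _ _ (Hc2 (s,a)) (Hq x))) (fun x => Rmult_le_pos _ _ (Hc3 (s,a)) (Rabs_pos (q1 s a x - q2 s a x))) S4 S3) as [S5 E5].
    unfold G, T; simpl. split; auto. rewrite E5, E4, E1, E2, E3, Eq. unfold dq, DL; simpl. ring. }
  assert (ST : sm T).
  { destruct (joint_lem nu pi1 Hn Sn Hp1) as [J1 _].
    destruct (joint_lem nu pi2 Hn Sn Hp2) as [J2 _].
    destruct (joint_lem nu' pi2 Hn' Sn' Hp2) as [J3 _].
    pose proof (joint_nn nu pi1 Hn Hp1) as N1.
    pose proof (joint_nn nu pi2 Hn Hp2) as N2.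
    pose proof (joint_nn nu' pi2 Hn' Hp2) as N3.
    assert (SB : sm (fun z => 3 * joint nu pi1 z + (2 * joint nu pi2 z + joint nu' pi2 z))).
    { apply sm_add; [intro; specialize (N1 x); lra|intro x; specialize (N2 x); specialize (N3 x); lra| |].
      - apply sm_scal; auto; lra.
      - apply sm_add; auto. intro x; specialize (N2 x); lra. apply sm_scal; auto; lra. }
    refine (proj1 (psum_mono T _ _ SB)).
    intros [s a]. unfold T, c1, c2, c3, joint, w; simpl.
    destruct (Hdq (s, a)) as [D0 [D2 _]].
    destruct (pol_D1 pi1 s Hp1) as [P1 _]. destruct (pol_D1 pi2 s Hp2) as [P2 _].
    specialize (P1 a); specialize (P2 a). specialize (Hn s); specialize (Hn' s).
    assert (Rabs (nu s - nu' s) * pi2 s a <= (nu s + nu' s) * pi2 s a).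
    { apply Rmult_le_compat_r; auto. unfold Rabs; destruct Rcase_abs; lra. }
    assert (nu s * Rabs (pi1 s a - pi2 s a) <= nu s * (pi1 s a + pi2 s a)).
    { apply Rmult_le_compat_l; auto. unfold Rabs; destruct Rcase_abs; lra. }
    assert (nu s * pi1 s a * dq (s, a) <= nu s * pi1 s a * 2).
    { apply Rmult_le_compat_l; auto. apply Rmult_le_pos; auto. }
    nra. }
  destruct (fub G HG (fun sa => proj1 (Hsec sa))) as [SG EG].
  { apply (sm_ext T); auto. intro; symmetry; apply Hsec. }
  rewrite (psum_ext _ T) in EG by (intro; apply Hsec).
  destruct (psum_swap G SG) as [SG' EG'].
  set (G' := fun z : St * (St * Ac) => G (snd z, fst z)) in *.
  assert (HG' : forall z, 0 <= G' z) by (intro; apply HG).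
  destruct (fubB G' HG' SG') as [Sec' [SS' LS']].
  destruct (step_lem nu pi1 q1 Dn Hp1 Hq1) as [SF1 [EF1 D1s]].
  destruct (step_lem nu' pi2 q2 Dn' Hp2 Hq2) as [SF2 [EF2 D2s]].
  assert (Hpt : forall s', Rabs (step pi1 q1 nu s' - step pi2 q2 nu' s') <= psum (fun y => G' (s', y))).
  { intro s'. rewrite EF1, EF2.
    destruct (psum_nonneg_le_diff _ _ (stepF_nn nu pi1 q1 s' Hn Hp1 Hq1) (stepF_nn nu' pi2 q2 s' Hn' Hp2 Hq2) (SF1 s') (SF2 s')) as [_ L].
    eapply Rle_trans; [apply L|]. apply psum_mono; auto.
    intros [s a]. unfold G', G, c1, c2, c3, stepF, joint, w; simpl.
    destruct (pol_D1 pi1 s Hp1) as [P1 _]. destruct (pol_D1 pi2 s Hp2) as [P2 _].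
    destruct (dyn_D1 q2 s a Hq2) as [Q2 _].
    apply abs3; auto. }
  destruct (psum_mono _ _ Hpt SS') as [_ L1].
  unfold DL at 1. eapply Rle_trans; [apply L1|]. eapply Rle_trans; [apply LS'|].
  rewrite EG', EG.
  destruct (joint_lem w pi2 Hw Sd Hp2) as [J1 E1].
  assert (S2 : sm c2).
  { refine (proj1 (psum_mono c2 (fun z => joint nu pi1 z + joint nu pi2 z) _ _)).
    - intros [s a]; unfold c2, joint; simpl.
      destruct (pol_D1 pi1 s Hp1) as [P1 _]. destruct (pol_D1 pi2 s Hp2) as [P2 _].
      specialize (P1 a); specialize (P2 a). specialize (Hn s).
      rewrite <- Rmult_plus_distr_l. apply Rmult_le_compat_l; auto. unfold Rabs; destruct Rcase_abs; lra.
    - apply sm_add; try apply joint_nn; auto; apply joint_lem; auto. }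
  assert (S3 : sm (fun sa => c3 sa * dq sa)).
  { refine (proj1 (psum_mono _ (fun z => 2 * c3 z) _ _)).
    - intro z. destruct (Hdq z) as [_ [D2 _]]. specialize (Hc3 z). nra.
    - apply sm_scal; [lra|]. apply joint_lem; auto. }
  destruct (psum_add c1 c2 Hc1 Hc2 J1 S2) as [S12 E12].
  destruct (psum_add (fun z => c1 z + c2 z) (fun z => c3 z * dq z)) as [_ E123]; auto.
  { intro z; specialize (Hc1 z); specialize (Hc2 z); lra. }
  { intro z. apply Rmult_le_pos; auto. apply Hdq. }
  unfold T. rewrite E123, E12. fold c1 in E1. rewrite E1. unfold dq, DL, w. apply Rle_refl.
Qed.
End MDP2.

Section MDP3.
Context {St Ac : Type}.

Lemma DL_self (mu : St -> R) : DL mu mu = 0.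
Proof. unfold DL. rewrite (psum_ext _ (fun _ => 0)); [apply psum_zero|]. intro; rewrite Rminus_diag, Rabs_R0; auto. Qed.

Lemma DL_sym (mu nu : St -> R) : DL mu nu = DL nu mu.
Proof. unfold DL. apply psum_ext. intro; apply Rabs_minus_sym. Qed.

Lemma DL_triang (a b c : St -> R) : D1 a -> D1 b -> D1 c -> DL a c <= DL a b + DL b c.
Proof.
  intros Da Db Dc. destruct (DL_lem a b Da Db) as [S1 _]. destruct (DL_lem b c Db Dc) as [S2 _].
  destruct (psum_add _ _ (fun x => Rabs_pos (a x - b x)) (fun x => Rabs_pos (b x - c x)) S1 S2) as [S E].
  assert (Hpt : forall x, Rabs (a x - c x) <= Rabs (a x - b x) + Rabs (b x - c x)).
  { intro x. replace (a x - c x) with ((a x - b x) + (b x - c x)) by ring; apply Rabs_triang. }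
  destruct (psum_mono (fun x => Rabs (a x - c x)) _ Hpt S) as [_ L].
  unfold DL. lra.
Qed.

Lemma wsum_le (w : St -> R) (h : St * Ac -> R) C : (forall s, 0 <= w s) -> sm w -> 0 <= C ->
  (forall z, 0 <= h z) -> (forall s, sm (fun a => h (s, a))) -> (forall s, psum (fun a => h (s, a)) <= C) ->
  psum (fun z => w (fst z) * h z) <= C * psum w.
Proof.
  intros Hw Sw HC Hh Sh Ph.
  assert (Hsec : forall s, sm (fun a => w s * h (s, a)) /\ psum (fun a => w s * h (s, a)) = w s * psum (fun a => h (s, a))).
  { intro s. apply psum_scal; auto. }
  assert (SS : sm (fun s => psum (fun a => w s * h (s, a)))).
  { refine (proj1 (psum_mono _ (fun s => C * w s) _ _)).
    - intro s. rewrite (proj2 (Hsec s)). rewrite Rmult_comm. apply Rmult_le_compat_r; auto.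
    - apply sm_scal; auto. }
  destruct (fub (fun z => w (fst z) * h z)) as [_ E].
  - intro z; apply Rmult_le_pos; auto.
  - intro s; apply (proj1 (Hsec s)).
  - apply SS.
  - rewrite E. destruct (psum_scal w C HC Sw) as [_ E2]. rewrite <- E2.
    apply psum_mono.
    + intro s. simpl. rewrite (proj2 (Hsec s)). rewrite Rmult_comm. apply Rmult_le_compat_r; auto.
    + apply sm_scal; auto.
Qed.

Lemma val_lem (mu mu' : St -> R) (pi : St -> Ac -> R) (r : St -> Ac -> R) rmax :
  D1 mu -> D1 mu' -> is_policy pi -> 0 <= rmax -> (forall s a, Rabs (r s a) <= rmax) ->
  sm (fun sa : St * Ac => Rabs (mu (fst sa) * pi (fst sa) (snd sa) * r (fst sa) (snd sa))) /\
  Rabs (tsum (fun sa : St * Ac => mu (fst sa) * pi (fst sa) (snd sa) * r (fst sa) (snd sa))) <= rmax /\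
  Rabs (tsum (fun sa : St * Ac => mu (fst sa) * pi (fst sa) (snd sa) * r (fst sa) (snd sa))
        - tsum (fun sa : St * Ac => mu' (fst sa) * pi (fst sa) (snd sa) * r (fst sa) (snd sa)))
   <= rmax * DL mu mu'.
Proof.
  intros Dm Dm' Hp Hr0 Hr.
  pose proof Dm as [Hm [Sm Em]]. pose proof Dm' as [Hm' [Sm' Em']].
  assert (Hsm : forall nu : St -> R, D1 nu ->
    sm (fun sa : St * Ac => Rabs (nu (fst sa) * pi (fst sa) (snd sa) * r (fst sa) (snd sa))) /\
    psum (fun sa : St * Ac => Rabs (nu (fst sa) * pi (fst sa) (snd sa) * r (fst sa) (snd sa))) <= rmax).
  { intros nu [Hn [Sn En]]. destruct (joint_lem nu pi Hn Sn Hp) as [J E].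
    destruct (psum_scal _ rmax Hr0 J) as [J2 E2].
    destruct (psum_mono (fun sa : St * Ac => Rabs (nu (fst sa) * pi (fst sa) (snd sa) * r (fst sa) (snd sa))) (fun x => rmax * joint nu pi x)) as [S L]; [|exact J2|].
    - intros [s a]; unfold joint; simpl. rewrite !Rabs_mult, (Rabs_right (nu s)), (Rabs_right (pi s a)).
      + rewrite Rmult_comm. apply Rmult_le_compat_r; auto. apply Rmult_le_pos; auto. apply (pol_D1 pi s Hp).
      + apply Rle_ge, (pol_D1 pi s Hp).
      + apply Rle_ge, Hn.
    - split; auto. rewrite E2, E, En in L. lra. }
  destruct (Hsm mu Dm) as [S1 L1]. destruct (Hsm mu' Dm') as [S2 L2].
  assert (S0 : sm (fun _ : St * Ac => Rabs 0)) by (apply (sm_ext (fun _ => 0)); [intro; rewrite Rabs_R0; auto|apply sm_zero]).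
  assert (T0 : tsum (fun _ : St * Ac => 0) = 0) by (rewrite tsum_nn; [apply psum_zero|intros; lra]).
  split; auto. split.
  - pose proof (tsum_diff _ (fun _ => 0) S1 S0) as A. pose proof (tsum_diff (fun _ => 0) _ S0 S1) as B.
    cbv beta in A, B. rewrite T0 in A, B.
    rewrite (psum_ext (fun x : St * Ac => Rabs (_ - 0)) (fun x => Rabs (mu (fst x) * pi (fst x) (snd x) * r (fst x) (snd x)))) in A
      by (intro; rewrite Rminus_0_r; auto).
    rewrite (psum_ext (fun x : St * Ac => Rabs (0 - _)) (fun x => Rabs (mu (fst x) * pi (fst x) (snd x) * r (fst x) (snd x)))) in B
      by (intro; rewrite Rminus_0_l, Rabs_Ropp; auto).
    apply Rabs_le. lra.
  - destruct (DL_lem mu mu' Dm Dm') as [Sd _].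
    assert (Hb : psum (fun x : St * Ac => Rabs (mu (fst x) * pi (fst x) (snd x) * r (fst x) (snd x) - mu' (fst x) * pi (fst x) (snd x) * r (fst x) (snd x))) <= rmax * DL mu mu').
    { destruct (joint_lem (fun s => Rabs (mu s - mu' s)) pi (fun s => Rabs_pos _) Sd Hp) as [J E].
      destruct (psum_scal _ rmax Hr0 J) as [J2 E2].
      destruct (psum_mono (fun x : St * Ac => Rabs (mu (fst x) * pi (fst x) (snd x) * r (fst x) (snd x) - mu' (fst x) * pi (fst x) (snd x) * r (fst x) (snd x))) (fun x => rmax * joint (fun s => Rabs (mu s - mu' s)) pi x)) as [_ L]; [|exact J2|].
      - intros [s a]; unfold joint; simpl.
        replace (mu s * pi s a * r s a - mu' s * pi s a * r s a) with ((mu s - mu' s) * pi s a * r s a) by ring.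
        rewrite !Rabs_mult, (Rabs_right (pi s a)) by apply Rle_ge, (pol_D1 pi s Hp).
        rewrite Rmult_comm. apply Rmult_le_compat_r; auto. apply Rmult_le_pos; [apply Rabs_pos|apply (pol_D1 pi s Hp)].
      - rewrite E2, E in L. unfold DL. auto. }
    apply Rabs_le. split.
    + pose proof (tsum_diff _ _ S2 S1) as A. rewrite (psum_ext _ (fun x : St * Ac => Rabs (mu (fst x) * pi (fst x) (snd x) * r (fst x) (snd x) - mu' (fst x) * pi (fst x) (snd x) * r (fst x) (snd x)))) in A by (intro; apply Rabs_minus_sym). lra.
    + pose proof (tsum_diff _ _ S1 S2) as A. lra.
Qed.

End MDP3.

Section MDP4.
Context {St Ac : Type}.

Lemma state_law_D1 (rho0 : St -> R) (pi : St -> Ac -> R) q : D1 rho0 -> is_policy pi -> is_dynamics q ->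
  forall t, D1 (state_law rho0 pi q t).
Proof. intros H Hp Hq t; induction t; simpl; auto. apply step_lem; auto. Qed.

Lemma aux_D1 (rho0 : St -> R) (pi1 pi2 : St -> Ac -> R) q1 q2 m :
  D1 rho0 -> is_policy pi1 -> is_dynamics q1 -> is_policy pi2 -> is_dynamics q2 ->
  forall i, D1 (branch_law_aux rho0 pi1 q1 pi2 q2 m i).
Proof.
  intros H Hp1 Hq1 Hp2 Hq2 i; induction i; simpl; auto.
  destruct (Nat.ltb i m); apply step_lem; auto.
Qed.

Lemma zero_term2 (nu : St -> R) (pi : St -> Ac -> R) :
  psum (fun sa => nu (fst sa) * Rabs (pi (fst sa) (snd sa) - pi (fst sa) (snd sa))) = 0.
Proof. rewrite (psum_ext _ (fun _ => 0)); [apply psum_zero|]. intro; rewrite Rminus_diag, Rabs_R0; ring. Qed.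

Lemma zero_term3 (nu : St -> R) (pi : St -> Ac -> R) (q : St -> Ac -> St -> R) :
  psum (fun sa => joint nu pi sa * DL (q (fst sa) (snd sa)) (q (fst sa) (snd sa))) = 0.
Proof. rewrite (psum_ext _ (fun _ => 0)); [apply psum_zero|]. intro; rewrite DL_self; ring. Qed.

Lemma claim1 (rho0 : St -> R) (piD pi : St -> Ac -> R) p eps_pi :
  D1 rho0 -> is_policy piD -> is_policy pi -> is_dynamics p -> 0 <= eps_pi ->
  (forall s, TV (piD s) (pi s) <= eps_pi) ->
  forall m i, DL (branch_law_aux rho0 piD p pi p m i) (state_law rho0 pi p i) <= 2 * INR (min i m) * eps_pi.
Proof.
  intros Hr HpD Hp Hq He Hpol m i.
  induction i as [|i IH]; cbn [branch_law_aux state_law].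
  - rewrite DL_self. simpl. lra.
  - pose proof (aux_D1 rho0 piD pi p p m Hr HpD Hq Hp Hq i) as Da.
    pose proof (state_law_D1 rho0 pi p Hr Hp Hq i) as Ds.
    destruct (Nat.ltb i m) eqn:E.
    + apply Nat.ltb_lt in E.
      pose proof (step_diff _ _ piD pi p p Da Ds HpD Hp Hq Hq) as L.
      rewrite zero_term3 in L.
      assert (L2 : psum (fun sa => branch_law_aux rho0 piD p pi p m i (fst sa) * Rabs (piD (fst sa) (snd sa) - pi (fst sa) (snd sa))) <= 2 * eps_pi * 1).
      { pose proof Da as [Hn [Sn En]]. rewrite <- En.
        apply (wsum_le _ (fun sa => Rabs (piD (fst sa) (snd sa) - pi (fst sa) (snd sa)))); auto; try lra.
        - intro; apply Rabs_pos.
        - intro s. apply (DL_lem _ _ (pol_D1 piD s HpD) (pol_D1 pi s Hp)).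
        - intro s. specialize (Hpol s). unfold TV in Hpol. rewrite tsum_nn in Hpol by (intro; apply Rabs_pos).
          simpl. lra. }
      replace (min (S i) m) with (S (min i m)) by lia. rewrite S_INR. lra.
    + apply Nat.ltb_ge in E.
      pose proof (step_diff _ _ pi pi p p Da Ds Hp Hp Hq Hq) as L.
      rewrite zero_term3, zero_term2 in L.
      replace (min (S i) m) with (min i m) by lia. lra.
Qed.

Lemma claim2 (rho0 : St -> R) (piD pi : St -> Ac -> R) p phat eps_m m t :
  D1 rho0 -> is_policy piD -> is_policy pi -> is_dynamics p -> is_dynamics phat ->
  (forall i, (m <= i)%nat -> (i < t)%nat ->
     tsum (fun sa : St * Ac =>
        branch_law_aux rho0 piD p pi p m i (fst sa) * pi (fst sa) (snd sa)
        * TV (p (fst sa) (snd sa)) (phat (fst sa) (snd sa))) <= eps_m) ->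
  forall i, (i <= t)%nat ->
  DL (branch_law_aux rho0 piD p pi p m i) (branch_law_aux rho0 piD p pi phat m i) <= 2 * INR (i - m) * eps_m.
Proof.
  intros Hr HpD Hp Hq Hq' Hmod i.
  induction i as [|i IH]; cbn [branch_law_aux state_law]; intro Hit.
  - rewrite DL_self. simpl. lra.
  - pose proof (aux_D1 rho0 piD pi p p m Hr HpD Hq Hp Hq i) as Da.
    pose proof (aux_D1 rho0 piD pi p phat m Hr HpD Hq Hp Hq' i) as Db.
    specialize (IH ltac:(lia)).
    destruct (Nat.ltb i m) eqn:E.
    + apply Nat.ltb_lt in E.
      pose proof (step_diff _ _ piD piD p p Da Db HpD HpD Hq Hq) as L.
      rewrite zero_term3, zero_term2 in L.
      replace (i - m)%nat with 0%nat in IH by lia. replace (S i - m)%nat with 0%nat by lia. lra.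
    + apply Nat.ltb_ge in E.
      pose proof (step_diff _ _ pi pi p phat Da Db Hp Hp Hq Hq') as L.
      rewrite zero_term2 in L.
      specialize (Hmod i E ltac:(lia)).
      rewrite tsum_nn in Hmod.
      2:{ intros [s a]; simpl. apply Rmult_le_pos; [apply Rmult_le_pos|].
          - apply Da. - apply (pol_D1 pi s Hp). - unfold TV. rewrite tsum_nn by (intro; apply Rabs_pos).
            pose proof (psum_ge0 (fun x => Rabs (p s a x - phat s a x))). lra. }
      pose proof Da as [Hn [Sn En]].
      assert (Sm : sm (fun sa : St * Ac => branch_law_aux rho0 piD p pi p m i (fst sa) * pi (fst sa) (snd sa)
        * TV (p (fst sa) (snd sa)) (phat (fst sa) (snd sa)))).
      { destruct (joint_lem _ pi Hn Sn Hp) as [J _].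
        refine (proj1 (psum_mono _ (joint (branch_law_aux rho0 piD p pi p m i) pi) _ J)).
        intros [s a]; unfold joint; simpl.
        destruct (DL_lem _ _ (dyn_D1 p s a Hq) (dyn_D1 phat s a Hq')) as [_ L2].
        unfold TV. rewrite tsum_nn by (intro; apply Rabs_pos). unfold DL in L2.
        pose proof (psum_ge0 (fun x => Rabs (p s a x - phat s a x))).
        assert (0 <= branch_law_aux rho0 piD p pi p m i s * pi s a) by (apply Rmult_le_pos; [apply Hn|apply (pol_D1 pi s Hp)]).
        nra. }
      destruct (psum_scal _ 2 ltac:(lra) Sm) as [_ E2].
      rewrite (psum_ext (fun sa => joint _ pi sa * DL _ _) (fun sa => 2 * (branch_law_aux rho0 piD p pi p m i (fst sa) * pi (fst sa) (snd sa)
        * TV (p (fst sa) (snd sa)) (phat (fst sa) (snd sa))))) in L.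
      2:{ intros [s a]; unfold joint, TV, DL; simpl. rewrite tsum_nn by (intro; apply Rabs_pos). field. }
      rewrite E2 in L.
      replace (S i - m)%nat with (S (i - m)) by lia. rewrite S_INR. lra.
Qed.
End MDP4.

Lemma nat_fsum_le (g : nat -> R) l : (forall t, 0 <= g t) -> NoDup l ->
  exists N, fsum g l <= fsum g (seq 0 N).
Proof.
  intros Hg Hl. exists (S (list_max l)). apply fsum_incl; auto. apply seq_NoDup.
  intros x Hx. apply in_seq. split; [lia|].
  assert (x <= list_max l)%nat; [|lia].
  pose proof (proj1 (list_max_le l (list_max l)) (le_n _)) as F.
  rewrite Forall_forall in F. auto.
Qed.

Lemma fsum_seqS (g : nat -> R) N : fsum g (seq 0 (S N)) = fsum g (seq 0 N) + g N.
Proof. rewrite seq_S, fsum_app. simpl. ring. Qed.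

Lemma geo_eq x N : fsum (fun t => x ^ t) (seq 0 N) * (1 - x) = 1 - x ^ N.
Proof. induction N; [simpl; ring|]. rewrite fsum_seqS. simpl. rewrite Rmult_plus_distr_r, IHN. ring. Qed.

Lemma geo_le x N : 0 <= x < 1 -> fsum (fun t => x ^ t) (seq 0 N) <= 1 / (1 - x).
Proof.
  intro H. pose proof (geo_eq x N). pose proof (pow_le x N (proj1 H)).
  apply (Rmult_le_reg_r (1 - x)); [lra|]. rewrite H0. field_simplify; lra.
Qed.

Lemma jsum_eq x N : fsum (fun j => INR j * x ^ j) (seq 0 N) * (1 - x) ^ 2 = x - INR N * x ^ N + (INR N - 1) * x ^ (S N).
Proof.
  induction N; [simpl; ring|]. rewrite fsum_seqS, Rmult_plus_distr_r, IHN, S_INR. simpl. ring.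
Qed.

Lemma jsum_le x N : 0 <= x < 1 -> fsum (fun j => INR j * x ^ j) (seq 0 N) <= x / (1 - x) ^ 2.
Proof.
  intro H. pose proof (jsum_eq x N). pose proof (pow_le x N (proj1 H)).
  assert ((1 - x) ^ 2 > 0) by (apply pow_lt; lra).
  apply (Rmult_le_reg_r ((1 - x) ^ 2)); auto. rewrite H0. field_simplify; [|lra].
  simpl. pose proof (pos_INR N).
  assert (INR N * x ^ N * (1 - x) + x ^ N * x >= 0).
  { apply Rle_ge. apply Rplus_le_le_0_compat; apply Rmult_le_pos; try apply Rmult_le_pos; lra. }
  nra.
Qed.

Lemma shift_sum (g : nat -> R) k N : fsum g (seq 0 (k + N)) = fsum g (seq 0 k) + fsum (fun j => g (k + j)%nat) (seq 0 N).
Proof.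
  induction N.
  - rewrite Nat.add_0_r. simpl. ring.
  - rewrite Nat.add_succ_r, !fsum_seqS, IHN. ring.
Qed.

Lemma fsum_ext_in {T} (f g : T -> R) l : (forall x, In x l -> f x = g x) -> fsum f l = fsum g l.
Proof. intro H; induction l; simpl; auto. rewrite IHl, H; simpl; auto. intros; apply H; simpl; auto. Qed.

Lemma tk_le x k N : 0 <= x < 1 -> fsum (fun t => INR (t - k) * x ^ t) (seq 0 N) <= x ^ (k + 1) / (1 - x) ^ 2.
Proof.
  intro H.
  assert (Hn : forall t, 0 <= INR (t - k) * x ^ t) by (intro; apply Rmult_le_pos; [apply pos_INR|apply pow_le; lra]).
  eapply Rle_trans.
  { apply (fsum_incl _ _ (seq 0 (k + N))); auto; try apply seq_NoDup.
    intros y Hy; apply in_seq in Hy; apply in_seq; lia. }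
  rewrite shift_sum.
  rewrite (fsum_ext_in _ (fun _ => 0) (seq 0 k)).
  2:{ intros y Hy; apply in_seq in Hy. replace (y - k)%nat with 0%nat by lia. simpl; ring. }
  rewrite fsum_zero, Rplus_0_l.
  rewrite (fsum_ext _ (fun j => x ^ k * (INR j * x ^ j))).
  2:{ intro j. replace (k + j - k)%nat with j by lia. rewrite pow_add. ring. }
  rewrite fsum_scal. rewrite pow_add. simpl (x ^ 1).
  pose proof (jsum_le x N H). pose proof (pow_le x k (proj1 H)).
  replace (x ^ k * (x * 1) / (1 - x) ^ 2) with (x ^ k * (x / (1 - x) ^ 2)) by (field; lra).
  apply Rmult_le_compat_l; auto.
Qed.

Theorem theorem3
  (St Ac : Type) (HSt : countable St) (HAc : countable Ac)
  (rho0 : St -> R) (Hrho0 : is_distr rho0)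
  (gamma : R) (Hgamma : 0 < gamma < 1)
  (r : St -> Ac -> R) (rmax : R) (Hr : forall s a, Rabs (r s a) <= rmax)
  (p phat : St -> Ac -> St -> R) (Hp : is_dynamics p) (Hphat : is_dynamics phat)
  (piD pi : St -> Ac -> R) (HpiD : is_policy piD) (Hpi : is_policy pi)
  (k : nat) (eps_pi eps_m : R)
  (Hpol : forall s, TV (piD s) (pi s) <= eps_pi)
  (Hmod : forall t i : nat, (t - k <= i)%nat -> (i < t)%nat ->
     tsum (fun sa : St * Ac =>
        branch_law rho0 piD p pi p k t i (fst sa) * pi (fst sa) (snd sa)
        * TV (p (fst sa) (snd sa)) (phat (fst sa) (snd sa))) <= eps_m) :
  eta rho0 gamma r pi p >=
  eta_k rho0 gamma r piD p pi phat k
  - 2 * rmax * (gamma ^ (k + 1) * eps_pi / (1 - gamma) ^ 2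
                + gamma ^ k * eps_pi / (1 - gamma)
                + INR k / (1 - gamma) * eps_m).
Proof.
  pose proof (distr_D1 _ Hrho0) as Dr.
  destruct (D1_inhabited _ Dr) as [s0 _].
  destruct (D1_inhabited _ (pol_D1 pi s0 Hpi)) as [a0 _].
  assert (Hrm : 0 <= rmax) by (eapply Rle_trans; [apply Rabs_pos|apply (Hr s0 a0)]).
  assert (Hep : 0 <= eps_pi).
  { eapply Rle_trans; [|apply (Hpol s0)]. unfold TV. rewrite tsum_nn by (intro; apply Rabs_pos).
    pose proof (psum_ge0 (fun x => Rabs (piD s0 x - pi s0 x))). lra. }
  assert (Hkm : 0 <= INR k * eps_m /\ forall t, INR (t - (t - k)) * eps_m <= INR k * eps_m).
  { destruct k as [|k'].
    - split; [simpl; lra|]. intro t. replace (t - (t - 0))%nat with 0%nat by lia. simpl; lra.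
    - assert (Hm : 0 <= eps_m).
      { eapply Rle_trans; [|apply (Hmod 1%nat 0%nat ltac:(lia) ltac:(lia))].
        rewrite tsum_nn. apply psum_ge0.
        intros [s a]; simpl. apply Rmult_le_pos; [apply Rmult_le_pos|].
        - apply (aux_D1 rho0 piD pi p p _ Dr HpiD Hp Hpi Hp).
        - apply (pol_D1 pi s Hpi).
        - unfold TV. rewrite tsum_nn by (intro; apply Rabs_pos).
          pose proof (psum_ge0 (fun x => Rabs (p s a x - phat s a x))). lra. }
      split; [apply Rmult_le_pos; auto; apply pos_INR|].
      intro t. apply Rmult_le_compat_r; auto. apply le_INR. lia. }
  destruct Hkm as [Hkm0 Hkm].
  set (A := fun t => tsum (fun sa : St * Ac => state_law rho0 pi p t (fst sa) * pi (fst sa) (snd sa) * r (fst sa) (snd sa))).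
  set (mu := fun t => branch_law_aux rho0 piD p pi phat (t - k) t).
  set (B := fun t => tsum (fun sa : St * Ac => mu t (fst sa) * pi (fst sa) (snd sa) * r (fst sa) (snd sa))).
  set (C := fun t => gamma ^ t * (rmax * (2 * INR (t - k) * eps_pi + 2 * (INR k * eps_m)))).
  set (Bound := 2 * rmax * (gamma ^ (k + 1) * eps_pi / (1 - gamma) ^ 2 + INR k / (1 - gamma) * eps_m)).
  assert (HC : forall t, 0 <= C t).
  { intro t. unfold C. apply Rmult_le_pos; [apply pow_le; lra|]. apply Rmult_le_pos; auto.
    pose proof (pos_INR (t - k)). nra. }
  assert (SC : sm C /\ psum C <= Bound).
  { apply psum_le. intros l Hl. destruct (nat_fsum_le C l HC Hl) as [N L]. eapply Rle_trans; [apply L|].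
    rewrite (fsum_ext _ (fun t => (2 * rmax * eps_pi) * (INR (t - k) * gamma ^ t) + (2 * rmax * (INR k * eps_m)) * gamma ^ t))
      by (intro; unfold C; ring).
    rewrite fsum_plus, !fsum_scal.
    pose proof (tk_le gamma k N ltac:(lra)). pose proof (geo_le gamma N ltac:(lra)).
    unfold Bound.
    assert (0 <= 2 * rmax * eps_pi) by nra. assert (0 <= 2 * rmax * (INR k * eps_m)) by nra.
    apply Rmult_le_compat_l with (r := 2 * rmax * eps_pi) in H; auto.
    apply Rmult_le_compat_l with (r := 2 * rmax * (INR k * eps_m)) in H0; auto.
    replace (2 * rmax * (gamma ^ (k + 1) * eps_pi / (1 - gamma) ^ 2 + INR k / (1 - gamma) * eps_m))
      with (2 * rmax * eps_pi * (gamma ^ (k + 1) / (1 - gamma) ^ 2) + 2 * rmax * (INR k * eps_m) * (1 / (1 - gamma)))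
      by (field; lra).
    change (fun t : nat => gamma ^ t) with (pow gamma) in H0. lra. }
  destruct SC as [SC LC].
  assert (Hper : forall t, Rabs (B t) <= rmax /\ Rabs (A t) <= rmax /\ Rabs (B t - A t) <= rmax * (2 * INR (t - k) * eps_pi + 2 * (INR k * eps_m))).
  { intro t.
    pose proof (aux_D1 rho0 piD pi p phat (t - k) Dr HpiD Hp Hpi Hphat t) as Dmu.
    pose proof (aux_D1 rho0 piD pi p p (t - k) Dr HpiD Hp Hpi Hp t) as Dnu.
    pose proof (state_law_D1 rho0 pi p Dr Hpi Hp t) as Dla.
    destruct (val_lem (mu t) (state_law rho0 pi p t) pi r rmax Dmu Dla Hpi Hrm Hr) as [_ [L1 L2]].
    destruct (val_lem (state_law rho0 pi p t) (mu t) pi r rmax Dla Dmu Hpi Hrm Hr) as [_ [L3 _]].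
    split; [exact L1|split; [exact L3|]].
    eapply Rle_trans; [apply L2|]. apply Rmult_le_compat_l; auto.
    eapply Rle_trans; [apply (DL_triang _ _ _ Dmu Dnu Dla)|].
    pose proof (claim1 rho0 piD pi p eps_pi Dr HpiD Hpi Hp Hep Hpol (t - k) t) as C1.
    replace (min t (t - k)) with (t - k)%nat in C1 by lia.
    pose proof (claim2 rho0 piD pi p phat eps_m (t - k) t Dr HpiD Hpi Hp Hphat) as C2.
    specialize (C2 (fun i H1 H2 => Hmod t i H1 H2) t (le_n t)).
    rewrite DL_sym in C2. specialize (Hkm t). unfold mu. lra. }
  assert (Sgeo : sm (fun t => rmax * gamma ^ t)).
  { apply (psum_le _ (rmax * (1 / (1 - gamma)))). intros l Hl.
    destruct (nat_fsum_le (fun t => rmax * gamma ^ t) l ltac:(intro; apply Rmult_le_pos; [lra|apply pow_le; lra]) Hl) as [N L].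
    eapply Rle_trans; [apply L|]. rewrite fsum_scal. apply Rmult_le_compat_l; auto. apply geo_le; lra. }
  assert (SB : sm (fun t => Rabs (gamma ^ t * B t))).
  { refine (proj1 (psum_mono _ _ _ Sgeo)). intro t. rewrite Rabs_mult, Rabs_right by (apply Rle_ge, pow_le; lra).
    rewrite Rmult_comm. apply Rmult_le_compat_r; [apply pow_le; lra|apply Hper]. }
  assert (SA : sm (fun t => Rabs (gamma ^ t * A t))).
  { refine (proj1 (psum_mono _ _ _ Sgeo)). intro t. rewrite Rabs_mult, Rabs_right by (apply Rle_ge, pow_le; lra).
    rewrite Rmult_comm. apply Rmult_le_compat_r; [apply pow_le; lra|apply Hper]. }
  pose proof (tsum_diff _ _ SB SA) as D.
  destruct (psum_mono (fun t => Rabs (gamma ^ t * B t - gamma ^ t * A t)) C) as [_ LD]; auto.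
  { intro t. unfold C. rewrite <- Rmult_minus_distr_l, Rabs_mult, Rabs_right by (apply Rle_ge, pow_le; lra).
    apply Rmult_le_compat_l; [apply pow_le; lra|apply Hper]. }
  assert (EA : eta rho0 gamma r pi p = tsum (fun t => gamma ^ t * A t)) by reflexivity.
  assert (EB : eta_k rho0 gamma r piD p pi phat k = tsum (fun t => gamma ^ t * B t)) by reflexivity.
  rewrite EA, EB.
  assert (0 <= 2 * rmax * (gamma ^ k * eps_pi / (1 - gamma))).
  { apply Rmult_le_pos; [lra|]. apply Rmult_le_pos; [apply Rmult_le_pos; [apply pow_le; lra|auto]|].
    apply Rlt_le, Rinv_0_lt_compat; lra. }
  unfold Bound in LC. lra.
Qed.
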